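(* Regard $\mathbb{I}=[0,1]$ as a $\mathbb{U}$-poset with action given by evaluation. Then for all $a,b,r\in\mathbb{I}$: $a\le_r b$ iff $a\le b\dotplus r$. Consequently $\rho(a,b)=a\dotminus b$ and $\mathrm{dist}(a,b)=|a-b|$.
   Context: $\mathbb{U}$ is the monoid (under composition) of surjective monotone maps $\mathbb{I}\to\mathbb{I}$. $\dotplus,\dotminus$ denote truncated addition and subtraction on $\mathbb{I}$ ($s\dotplus t=\min(s+t,1)$, $s\dotminus t=\max(s-t,0)$). In a $\mathbb{U}$-poset $A$ (poset with a $\mathbb{U}$-action monotone in both variables), $a\le_r b$ means: for all $u,v\in\mathbb{U}$ with $u(t\dotplus r)\le v(t)$ for all $t\in\mathbb{I}$, $u(a)\le v(b)$. $\rho(a,b):=\bigwedge\{r\in\mathbb{I}\mid a\le_r b\}$, $\mathrm{dist}(a,b):=\rho(a,b)\vee\rho(b,a)$. *)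

(* Defs.v *)
From mathcomp Require Import all_boot all_order all_algebra.
From mathcomp Require Import classical_sets reals.
Set Implicit Arguments. Unset Strict Implicit. Unset Printing Implicit Defensive.
Import Order.TTheory GRing.Theory Num.Theory.
Local Open Scope ring_scope.
Local Open Scope classical_set_scope.

Section Defs.
Variable R : realType.

Definition inI (x : R) : Prop := 0 <= x /\ x <= 1.

Definition tplus (s t : R) : R := Num.min (s + t) 1.
Definition tminus (s t : R) : R := Num.max (s - t) 0.

(* u : R -> R represents an element of the monoid U: only its values on I
   matter; it maps I into I, is monotone (order preserving) on I and is
   surjective onto I. *)
Definition isU (u : R -> R) : Prop :=
  (forall x, inI x -> inI (u x)) /\
  (forall x y, inI x -> inI y -> x <= y -> u x <= u y) /\
  (forall y, inI y -> exists2 x, inI x & u x = y).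

Definition le_r (r a b : R) : Prop :=
  forall u v, isU u -> isU v ->
    (forall t, inI t -> u (tplus t r) <= v t) -> u a <= v b.

Definition rho (a b : R) : R := inf [set r | inI r /\ le_r r a b].

Definition dist (a b : R) : R := Num.max (rho a b) (rho b a).
End Defs.

(* Main.v *)
Require Import Defs.
From mathcomp Require Import all_boot all_order all_algebra.
From mathcomp Require Import classical_sets reals.
From mathcomp Require Import lra.
Import Order.TTheory GRing.Theory Num.Theory.
Local Open Scope ring_scope.

Ltac mm := rewrite ?minEle ?maxEle;
  repeat match goal with |- context[if (?x <= ?y)%O then _ else _] =>
    lazymatch x with context[if _ then _ else _] => fail | _ =>
    lazymatch y with context[if _ then _ else _] => fail | _ =>
    case: (leP x y) => ? end end end; lra.

Section P.
Variable R : realType.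

Lemma tplusI (t r : R) : inI t -> inI r -> inI (tplus t r).
Proof. rewrite /inI /tplus => -[? ?] [? ?]; split; mm. Qed.

Lemma le_r_back (a b r : R) : inI a -> inI b -> inI r ->
  a <= tplus b r -> le_r r a b.
Proof.
move=> Ia Ib Ir hab u v [_ [mu _]] _ h.
apply: le_trans (h b Ib); apply: mu => //; exact: tplusI.
Qed.

Lemma le_r_fwd (a b r : R) : inI a -> inI b -> inI r ->
  le_r r a b -> a <= tplus b r.
Proof.
move=> [a0 a1] [b0 b1] [r0 r1] h.
rewrite leNgt; apply/negP => hlt.
have hbr : b + r < 1 /\ b + r < a by move: hlt; rewrite /tplus; mm.
case: hbr => hbr1 hbra.
set c := 1 - r.
have c0 : 0 < c by rewrite /c; lra.
pose w (x : R) := Num.min (x / c) 1.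
have wmono : forall x y, x <= y -> w x <= w y.
  move=> x y xy; have : x / c <= y / c by rewrite ler_pM2r ?invr_gt0.
  rewrite /w; mm.
have wI : forall x, inI x -> inI (w x).
  move=> x [x0 x1]; have : 0 <= x / c by rewrite divr_ge0 // ltW.
  rewrite /w /inI; split; mm.
have wsurj : forall y, inI y -> w (y * c) = y.
  move=> y [y0 y1]; rewrite /w mulfK ?gt_eqF //; mm.
have yc : forall y, inI y -> inI (y * c).
  move=> y [y0 y1]; split; first by rewrite mulr_ge0 // ltW.
  have : y * c <= 1 * c by rewrite ler_pM2r.
  rewrite /c; lra.
pose u (x : R) := w (Num.max (x - r) 0).
have Uw : isU w.
  split; first exact: wI.
  split; first by move=> x y _ _; exact: wmono.
  move=> y Iy; exists (y * c); [exact: yc | exact: wsurj].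
have Uu : isU u.
  split.
    move=> x [x0 x1]; apply: wI; split; rewrite /c; mm.
  split.
    move=> x y _ _ xy; apply: wmono; mm.
  move=> y Iy; exists (y * c + r).
    have [h0 _] := yc y Iy; case: Iy => y0 y1.
    have h1 : y * c <= 1 * c by rewrite ler_pM2r.
    split; rewrite /c in h0 h1 *; lra.
  rewrite /u addrK; have [h0 _] := yc y Iy.
  have -> : Num.max (y * c) 0 = y * c by mm.
  exact: wsurj.
have Ht : (forall t, inI t -> u (tplus t r) <= w t).
  move=> t [t0 t1]; apply: wmono; rewrite /tplus; mm.
have := h u w Uu Uw Ht.
apply/negP; rewrite -ltNge /u.
have -> : Num.max (a - r) 0 = a - r by mm.
have h1 : b / c < (a - r) / c by rewrite ltr_pM2r ?invr_gt0 //; lra.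
have h2 : (a - r) / c <= 1 by rewrite ler_pdivrMr // mul1r /c; lra.
rewrite /w; mm.
Qed.

End P.

Theorem proposition4p5 (R : realType) :
  (forall a b r : R, inI a -> inI b -> inI r ->
     (le_r r a b <-> a <= tplus b r)) /\
  (forall a b : R, inI a -> inI b ->
     rho a b = tminus a b /\ dist a b = `|a - b|).
Proof.
have P1 : forall a b r : R, inI a -> inI b -> inI r ->
     (le_r r a b <-> a <= tplus b r).
  move=> a b r Ia Ib Ir; split; [exact: le_r_fwd | exact: le_r_back].
have Rho : forall a b : R, inI a -> inI b -> rho a b = tminus a b.
  move=> a b [a0 a1] [b0 b1].
  have mem : forall r : R, (inI r /\ le_r r a b) <-> (inI r /\ tminus a b <= r).
    move=> r; split.
      move=> [[r0 r1] /(@le_r_fwd R _ _ _ (conj a0 a1) (conj b0 b1) (conj r0 r1))].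
      rewrite /tplus /tminus => h; split => //; move: h; mm.
    move=> [[r0 r1] h]; split => //.
    apply: le_r_back => //; move: h; rewrite /tplus /tminus; mm.
  have inm : inI (tminus a b) /\ le_r (tminus a b) a b.
    apply/mem; split => //; rewrite /inI /tminus; split; mm.
  rewrite /rho; set S := [set r : R | inI r /\ le_r r a b]%classic.
  apply/eqP; rewrite eq_le; apply/andP; split.
    apply: (@ge_inf R S) => //; exists 0 => x /mem [[x0 _] _] //.
  apply: lb_le_inf; first by exists (tminus a b).
  by move=> x /mem [].
split => // a b Ia Ib; split; first exact: Rho.
rewrite /dist !Rho // /tminus.
case: (lerP 0 (a - b)) => h.
  rewrite ger0_norm //; mm.
rewrite ltr0_norm //; mm.
Qed.
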